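(* Let $M$ be a matroid of rank $r$ on a finite linearly ordered set $E$ and let $0\le k\le r-1$. Every $V\in\mathcal V_k$ is a circuit of $M$.
   Context: Graded lexicographic order on $2^E$: $X\prec Y$ if $|X|<|Y|$, or $|X|=|Y|$ and $\min(X\triangle Y)\in X$; $\min\mathcal X$ is the $\prec$-smallest member. $X$ is $k$-closed in $M$ if $\mathrm{cl}_M(Y)\subseteq X$ for all $Y\subseteq X$ with $|Y|\le k$; $\mathrm{cl}_k(X)$ is the intersection of all $k$-closed supersets of $X$ (so $\mathrm{cl}_{-1}(X)=X$). For a flat $F$ of rank $k$, $U^*_F=\min\{U:\mathrm{cl}_{k-1}(U)=F\}$, and $\mathcal U^*_k=\{U^*_F: F\text{ a flat of rank }k,\ |U^*_F|>k\}$. A subset $V\subseteq U$ is consecutive in $U$ if there are no $e,g\in V$ and $f\in U\setminus V$ with $e<f<g$. For $U\in\mathcal U^*_k$, $\mathcal V(U)$ is the set of $(k+1)$-subsets of $U$ that are consecutive in $U$, and $\mathcal V_k=\bigcup_{U\in\mathcal U^*_k}\mathcal V(U)$. *)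

(* Defs.v *)
From HB Require Import structures.
From mathcomp Require Import all_boot all_order all_algebra.
Set Implicit Arguments. Unset Strict Implicit. Unset Printing Implicit Defensive.
Import Order.TTheory GRing.Theory Num.Theory.

Record matroid (T : finType) := Matroid {
  indep : {set T} -> bool;
  indep0 : indep set0;
  indep_sub : forall A B : {set T}, A \subset B -> indep B -> indep A;
  indep_exch : forall A B : {set T}, indep A -> indep B -> (#|A| < #|B|)%N ->
     exists2 e, e \in B :\: A & indep (e |: A)
}.

Section Defs.
Context (d : Order.disp_t) (T : finOrderType d) (M : matroid T).

Definition rk (X : {set T}) : nat := \max_(Y : {set T} | (Y \subset X) && indep M Y) #|Y|.

Definition mrank : nat := rk [set: T].

Definition cl (X : {set T}) : {set T} := [set e | rk (e |: X) == rk X].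

Definition is_flat (F : {set T}) : bool := cl F == F.

Definition circuit (C : {set T}) : Prop :=
  ~~ indep M C /\ forall D : {set T}, D \proper C -> indep M D.

(* X is k-closed (k an integer, so that k = -1 is allowed) *)
Definition kclosed (k : int) (X : {set T}) : bool :=
  [forall Y : {set T}, ((Y \subset X) && ((#|Y|%:Z <= k)%R)) ==> (cl Y \subset X)].

Definition clk (k : int) (X : {set T}) : {set T} :=
  \bigcap_(Y : {set T} | kclosed k Y && (X \subset Y)) Y.

Definition glex_lt (X Y : {set T}) : bool :=
  (#|X| < #|Y|)%N ||
  ((#|X| == #|Y|) &&
   [exists e, (e \in X :\: Y) &&
      [forall f, (f \in (X :\: Y) :|: (Y :\: X)) ==> (e <= f)%O]]).

Definition is_glex_min (P : {set T} -> Prop) (U : {set T}) : Prop :=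
  P U /\ forall U' : {set T}, P U' -> U' <> U -> glex_lt U U'.

Definition Ustar (k : nat) (F U : {set T}) : Prop :=
  is_glex_min (fun U' => clk (k%:Z - 1) U' = F) U.

Definition in_Ustar_k (k : nat) (U : {set T}) : Prop :=
  exists F : {set T}, [/\ is_flat F, rk F = k, Ustar k F U & (k < #|U|)%N].

Definition consecutive (V U : {set T}) : bool :=
  ~~ [exists e, exists f, exists g,
        [&& e \in V, g \in V, f \in U :\: V, (e < f)%O & (f < g)%O]].

Definition in_V_k (k : nat) (V : {set T}) : Prop :=
  exists U : {set T}, [/\ in_Ustar_k k U, V \subset U, #|V| = k.+1 & consecutive V U].

End Defs.

(* Main.v *)
Require Import Defs.
From HB Require Import structures.
From mathcomp Require Import all_boot all_order all_algebra.
Set Implicit Arguments. Unset Strict Implicit. Unset Printing Implicit Defensive.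
Import Order.TTheory GRing.Theory Num.Theory.

Section Aux.
Context (d : Order.disp_t) (T : finOrderType d) (M : matroid T).

Lemma rk_ge (X Y : {set T}) : Y \subset X -> indep M Y -> (#|Y| <= rk M X)%N.
Proof. by move=> sYX iY; rewrite /rk; apply: (leq_bigmax_cond (F := fun Y : {set T} => #|Y|)); rewrite sYX iY. Qed.

Lemma sub_clk (k : int) (X : {set T}) : X \subset clk M k X.
Proof. by apply/subsetP=> x xX; apply/bigcapP=> Y /andP[_ /subsetP]; apply. Qed.

Lemma small_indep (k : nat) (F U : {set T}) : Ustar M k F U ->
  forall W : {set T}, W \subset U -> (#|W| <= k)%N -> indep M W.
Proof.
move=> [PU minU] W sWU cW.
case: (posnP k) => [k0|kpos].
  by move: cW; rewrite k0 leqn0 cards_eq0 => /eqP ->; apply: indep0.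
apply/negPn/negP=> dW.
have [C /minsetP [/andP [sCW dC] minC]] :
   {C | minset (fun C : {set T} => (C \subset W) && ~~ indep M C) C}.
  by apply: ex_minset; exists W; rewrite subxx dW.
have /set0Pn [e eC] : C != set0.
  by apply/eqP=> C0; move: dC; rewrite C0 indep0.
set C' := C :\ e.
have iC' : indep M C'.
  apply/negPn/negP=> dC'.
  have eqC := minC C' ltac:(by rewrite (subset_trans (subD1set C e) sCW) dC') (subD1set C e).
  by move: eC; rewrite -eqC /C' !inE eqxx.
have cC : #|C| = #|C'|.+1 by rewrite /C' (cardsD1 e C) eC.
have rkC' : rk M C' = #|C'|.
  apply/eqP; rewrite eqn_leq rk_ge ?subxx // andbT.
  by apply/bigmax_leqP=> Y /andP[sY _]; apply: subset_leq_card.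
have rkC : rk M C = #|C'|.
  apply/eqP; rewrite eqn_leq (rk_ge (subD1set C e) iC') andbT.
  apply/bigmax_leqP=> Y /andP[sY iY].
  have pY : Y \proper C.
    rewrite properEneq sY andbT; apply/eqP=> YC; by move: iY; rewrite YC (negbTE dC).
  by have := proper_card pY; rewrite cC ltnS.
have eU : e \in U by apply: (subsetP sWU); apply: (subsetP sCW).
have sC'U : C' \subset U :\ e.
  by apply: setSD; apply: subset_trans sCW sWU.
have cC' : (#|C'| <= k.-1)%N.
  have := subset_leq_card sCW; rewrite cC => h.
  by move: (leq_trans h cW) => h2; rewrite -ltnS (prednK kpos).
have eq_clk : clk M (k%:Z - 1)%R (U :\ e) = clk M (k%:Z - 1)%R U.
  rewrite /clk; apply: eq_bigl => Y; apply/andP/andP => [[kY sY]|[kY sY]]; split=> //.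
    apply/subsetP=> x xU; case: (eqVneq x e) => [->|nxe]; last first.
      by apply: (subsetP sY); rewrite !inE nxe.
    move: kY => /forallP /(_ C') /implyP; rewrite (subset_trans sC'U sY) /=.
    have -> : (#|C'|%:Z <= k%:Z - 1)%R.
      have -> : (Posz k - 1 = Posz k.-1)%R by rewrite -{1}(prednK kpos) -addn1 PoszD addrK.
      by rewrite lez_nat.
    move=> /(_ isT) /subsetP; apply; rewrite /cl inE.
    by rewrite setD1K // rkC rkC'.
  by apply: subset_trans sY; apply: subD1set.
have := minU (U :\ e); rewrite eq_clk PU => /(_ erefl).
have neq : U :\ e <> U by move=> h; move: eU; rewrite -h !inE eqxx.
move=> /(_ neq); rewrite /glex_lt (cardsD1 e U) eU.
rewrite add1n ltnNge leqnSn /=.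
by case/andP => /eqP /esym /n_Sn.
Qed.

End Aux.

Theorem lemma5p6 (d : Order.disp_t) (T : finOrderType d) (M : matroid T)
  (k : nat) (hk : (k < mrank M)%N) (V : {set T}) :
  in_V_k M k V -> circuit M V.
Proof.
move=> [U [[F [_ rkF UF _]] sVU cV _]].
split.
  apply/negP=> iV.
  have sVF : V \subset F by rewrite -(proj1 UF); apply: subset_trans sVU (sub_clk _ _ _).
  by have := rk_ge sVF iV; rewrite rkF cV ltnn.
move=> D pD; apply: (small_indep UF).
  by apply: subset_trans (proper_sub pD) sVU.
by have := proper_card pD; rewrite cV ltnS.
Qed.
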